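(* For $q\ge1$, the generating function $F_q(x)=\sum_{n\ge0}f_nx^n$, where $f_n$ is the number of $q$-decreasing binary words of length $n$, is $$F_q(x)=\frac{1-x^{q+1}}{1-2x+x^{q+2}}.$$
   Context: For $q\ge1$, a binary word is $q$-decreasing if for every maximal run of $0$s, of length $a>0$, together with the (possibly empty) maximal run of $1$s immediately following it, of length $b$, one has $q\cdot a>b$. The empty word is the unique word of length $0$. *)

(* Defs.v *)
From mathcomp Require Import all_boot all_order all_algebra.
Set Implicit Arguments. Unset Strict Implicit. Unset Printing Implicit Defensive.
Import GRing.Theory.

(* Binary words are seq bool: false = letter 0, true = letter 1. *)

Definition zrun (w : seq bool) (i : nat) : nat := find (fun c => c) (drop i w).
Definition orun (w : seq bool) (j : nat) : nat := find negb (drop j w).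

Definition starts_zrun (w : seq bool) (i : nat) : bool :=
  (i < size w) && ~~ nth true w i && ((i == 0) || nth false w i.-1).

(* q-decreasing: for every maximal 0-run (length a > 0) and the maximal 1-run
   immediately following it (length b, possibly 0), q * a > b. *)
Definition qdecreasing (q : nat) (w : seq bool) : bool :=
  all (fun i => starts_zrun w i ==>
         (orun w (i + zrun w i) < q * zrun w i)) (iota 0 (size w)).

Definition fcount (q n : nat) : nat :=
  #|[set w : n.-tuple bool | qdecreasing q w]|.

(* Main.v *)
Require Import Defs.
From mathcomp Require Import all_boot all_order all_algebra zify.
Import GRing.Theory.

Definition Pq (q : nat) (w : seq bool) (i : nat) : bool :=
  starts_zrun w i ==> (orun w (i + zrun w i) < q * zrun w i).

Lemma qdecE q w : qdecreasing q w = all (Pq q w) (iota 0 (size w)).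
Proof. by []. Qed.

Lemma Pq_cons q c w i :
  Pq q (c :: w) i.+1 = (starts_zrun w i && (c || (i != 0))) ==> (orun w (i + zrun w i) < q * zrun w i).
Proof.
rewrite /Pq /starts_zrun /zrun /orun /= ltnS.
by case: i => [|i] /=; rewrite ?orbF ?orbT ?andbT.
Qed.

Definition Aq q c w := all (fun i => Pq q (c :: w) i.+1) (iota 0 (size w)).
Definition restq q w := all (fun i => (i != 0) ==> Pq q w i) (iota 0 (size w)).

Lemma all_iotaS (P : pred nat) n : all P (iota 0 n.+1) = P 0 && all (fun i => P i.+1) (iota 0 n).
Proof. by rewrite /= -add1n iotaDl all_map. Qed.

Lemma qdec_cons q c w : qdecreasing q (c :: w) = Pq q (c :: w) 0 && Aq q c w.
Proof. by rewrite qdecE [size _]/= all_iotaS. Qed.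

Lemma restq_cons q c w : restq q (c :: w) = Aq q c w.
Proof. by rewrite /restq [size _]/= all_iotaS. Qed.

Lemma Aq_true q w : Aq q true w = qdecreasing q w.
Proof. rewrite /Aq qdecE; apply: eq_all => i; by rewrite Pq_cons andbT. Qed.

Lemma Aq_false q w : Aq q false w = restq q w.
Proof. rewrite /Aq /restq; apply: eq_all => i; rewrite Pq_cons /Pq /=.
by case: (i != 0); rewrite ?andbT ?andbF. Qed.

Lemma qdec_true q w : qdecreasing q (true :: w) = qdecreasing q w.
Proof. by rewrite qdec_cons Aq_true /Pq /starts_zrun /=. Qed.

Lemma restq_nseq q a y : restq q (nseq a false ++ y) = restq q y.
Proof. elim: a => [|a IH] //=. by rewrite restq_cons Aq_false. Qed.

Lemma find_nseq (P : pred bool) a y : ~~ P false -> find P (nseq a false ++ y) = a + find P y.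
Proof. move=> H; elim: a => [|a IH] //=. by rewrite (negbTE H) IH. Qed.

Lemma qdec_nseq_true q a w :
  qdecreasing q (nseq a.+1 false ++ true :: w) = ((find negb w).+1 < q * a.+1) && qdecreasing q w.
Proof.
change (nseq a.+1 false ++ true :: w) with (false :: (nseq a false ++ true :: w)).
rewrite qdec_cons Aq_false restq_nseq restq_cons Aq_true.
congr andb.
rewrite /Pq /starts_zrun /zrun /orun /=.
have -> : find id (nseq a false ++ true :: w) = a by rewrite find_nseq //= addn0.
rewrite drop_size_cat ?size_nseq //.
Qed.

Lemma qdec_nseq q a : 0 < q -> qdecreasing q (nseq a.+1 false).
Proof.
move=> q0.
rewrite -[nseq a.+1 false]cats0.
change (nseq a.+1 false ++ [::]) with (false :: (nseq a false ++ [::])).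
rewrite qdec_cons Aq_false restq_nseq.
rewrite /restq /= andbT /Pq /starts_zrun /zrun /orun /=.
have -> : find id (nseq a false ++ [::]) = a by rewrite find_nseq //= addn0.
rewrite drop_size_cat ?size_nseq //=. by rewrite muln_gt0 q0.
Qed.

Inductive st := SF | SZ of nat | SO of nat.

Definition step (q : nat) (s : st) (c : bool) : option st :=
  match s, c with
  | SF, true => Some SF
  | SF, false => Some (SZ q)
  | SZ k, false => Some (SZ (k + q))
  | SZ k, true => if 2 <= k then Some (SO (k - 2)) else None
  | SO t, true => if 0 < t then Some (SO t.-1) else None
  | SO t, false => Some (SZ q)
  end.

Fixpoint acc (q : nat) (s : st) (w : seq bool) : bool :=
  match w with
  | [::] => true
  | c :: w' => if step q s c is Some s' then acc q s' w' else false
  end.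

Lemma accO q t w : acc q (SO t) w = (find negb w <= t) && acc q SF w.
Proof.
elim: w t => [|[|] w IH] t //=.
by case: t => [|t] //=; rewrite IH.
Qed.

Lemma nseq_false_cons a w : nseq a false ++ false :: w = nseq a.+1 false ++ w.
Proof. by elim: a => //= a ->. Qed.

Lemma qdec_acc q : 0 < q -> forall w,
  qdecreasing q w = acc q SF w /\
  forall a, qdecreasing q (nseq a.+1 false ++ w) = acc q (SZ (q * a.+1)) w.
Proof.
move=> q0; elim => [|c w [IH1 IH2]].
  split; first by [].
  by move=> a; rewrite cats0 qdec_nseq.
case: c; split.
- by rewrite qdec_true IH1.
- move=> a; rewrite qdec_nseq_true /=.
  case: ifP => h; last first.
    apply/negbTE; rewrite negb_and; apply/orP; left; move/negbT: h; lia.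
  rewrite accO -IH1; congr andb; apply/idP/idP => H; lia.
- by rewrite -[false :: w]/(nseq 1 false ++ w) IH2 muln1.
- by move=> a; rewrite nseq_false_cons IH2 /= mulnSr.
Qed.

Fixpoint Wd (n : nat) : seq (seq bool) :=
  if n is n'.+1 then [seq true :: w | w <- Wd n'] ++ [seq false :: w | w <- Wd n']
  else [:: [::]].

Lemma cons_inj (c : bool) : injective (cons c).
Proof. by move=> x y [].
Qed.

Lemma memWd n w : (w \in Wd n) = (size w == n).
Proof.
elim: n w => [|n IH] [|c w] //=.
  by rewrite mem_cat; apply/negbTE; rewrite negb_or; apply/andP; split; apply/mapP => -[].
rewrite mem_cat eqSS -IH.
case: c.
- rewrite (mem_map (cons_inj true)).
  have -> : (true :: w \in [seq false :: x | x <- Wd n]) = false by apply/mapP => -[x _ []].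
  by rewrite orbF.
- rewrite (mem_map (cons_inj false)).
  have -> : (false :: w \in [seq true :: x | x <- Wd n]) = false by apply/mapP => -[x _ []].
  by [].
Qed.

Lemma uniqWd n : uniq (Wd n).
Proof.
elim: n => [|n IH] //=.
rewrite cat_uniq !map_inj_uniq //; try by move=> x y [].
rewrite IH /= andbT. apply/hasPn => w /mapP [x _ ->]. by apply/mapP => -[y _ []].
Qed.

Lemma card_count (n : nat) (P : pred (seq bool)) : #|[set w : n.-tuple bool | P w]| = count P (map val (enum {: n.-tuple bool})).
Proof.
rewrite cardsE cardE count_map /enum_mem size_filter -enumT.
rewrite !count_filter. apply: eq_count. move=> x. by rewrite /= !inE !andbT.
Qed.

Lemma fcount_Wd q n : fcount q n = count (qdecreasing q) (Wd n).
Proof.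
rewrite /fcount card_count.
suff /permP -> : perm_eq (map val (enum {: n.-tuple bool})) (Wd n) by [].
apply: uniq_perm.
- by rewrite map_inj_uniq ?enum_uniq //; apply: val_inj.
- exact: uniqWd.
move=> w; rewrite memWd; apply/mapP/idP.
  by move=> [t _ ->]; rewrite size_tuple.
move/eqP=> h; exists (Tuple (introT eqP h)) => //. by rewrite mem_enum.
Qed.

Definition C q s n := count (acc q s) (Wd n).

Lemma C0 q s : C q s 0 = 1.
Proof. by []. Qed.

Definition sc q s c n := if step q s c is Some s' then C q s' n else 0.

Lemma CS q s n : C q s n.+1 = sc q s true n + sc q s false n.
Proof.
have H c : count (fun w => acc q s (c :: w)) (Wd n) = sc q s c n.
  rewrite /sc; case E: (step q s c) => [s'|].
    by apply: eq_count => w; rewrite /= E.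
  by rewrite -(count_pred0 (Wd n)); apply: eq_count => w; rewrite /= E.
by rewrite /C /= count_cat !count_map -!H.
Qed.

Fixpoint Rtab (q n : nat) : seq nat :=
  if n is n'.+1 then let t := Rtab q n' in sumn (take q.+1 t) :: t else [:: 1].
Definition R q m := head 0 (Rtab q m).
Definition Rn q m j := if j <= m then R q (m - j) else 0.
Definition Wn q k m := \sum_(j < k) Rn q m j.

Lemma R0 q : R q 0 = 1. Proof. by []. Qed.

Lemma nth_Rtab q m j : nth 0 (Rtab q m) j = Rn q m j.
Proof.
rewrite /Rn; elim: m j => [|m IH] [|j] //=; by rewrite nth_nil.
Qed.

Lemma sumn_take k (s : seq nat) : sumn (take k s) = \sum_(j < k) nth 0 s j.
Proof.
elim: s k => [|x s IH] k.
  by rewrite big1 // => j _; rewrite nth_nil.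
case: k => [|k]; first by rewrite big_ord0.
by rewrite /= big_ord_recl /= IH.
Qed.

Lemma R_rec q m : R q m.+1 = Wn q q.+1 m.
Proof. by rewrite /R /= sumn_take /Wn; apply: eq_bigr => j _; rewrite nth_Rtab. Qed.

Lemma Wn_recl q k m : Wn q k.+1 m.+1 = R q m.+1 + Wn q k m.
Proof. by rewrite /Wn big_ord_recl /Rn /= subn0. Qed.

Lemma Wn_recr q k m : Wn q k.+1 m = Wn q k m + Rn q m k.
Proof. by rewrite /Wn big_ord_recr. Qed.

Lemma Wn0 q m : Wn q 0 m = 0.
Proof. by rewrite /Wn big_ord0. Qed.

Lemma Wn_0 q k : 0 < k -> Wn q k 0 = 1.
Proof.
case: k => // k _; rewrite /Wn big_ord_recl big1 //.
Qed.

Lemma Wn_add q a b m : Wn q (a + b) m = Wn q a m + (if a <= m then Wn q b (m - a) else 0).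
Proof.
rewrite /Wn big_split_ord /=; congr addn.
case: ifP => h.
  apply: eq_bigr => i _; rewrite /Rn.
  have -> : (a + i <= m) = (i <= m - a) by apply/idP/idP; lia.
  by rewrite subnDA.
by apply: big1 => i _; rewrite /Rn; case: ifP => //; lia.
Qed.

Lemma R1 q : R q 1 = 1.
Proof. by rewrite R_rec Wn_0. Qed.

Lemma closed q : 0 < q -> forall n,
  (forall s, 0 < s -> C q (SZ s) n = Wn q s n) /\
  (forall t, C q (SO t) n + (if t < n then R q (n - t) else 0) = R q n.+1).
Proof.
move=> q0; elim=> [|n [IHZ IHO]].
  split; first by move=> s s0; rewrite C0 Wn_0.
  by move=> t; rewrite C0 R1.
split.
- move=> [|s'] // _.
  rewrite CS /sc Wn_recl.
  have -> : step q (SZ s'.+1) false = Some (SZ (s' + q.+1)) by rewrite /= addSnnS.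
  rewrite (IHZ (s' + q.+1)); last by rewrite addnS.
  rewrite Wn_add -R_rec /=.
  case: s' => [|s''].
    by rewrite /= subn0 add0n addnC.
  rewrite /= !subSS subn0. have := IHO s''. case: ifP => h H.
    have e : (n - s''.+1).+1 = n - s'' by lia.
    rewrite e; lia.
  lia.
- move=> t; rewrite CS /sc /= (IHZ _ q0) R_rec Wn_recl.
  case: t => [|t] /=.
    by rewrite subn0 addnC.
  rewrite ltnS subSS -(IHO t). lia.
Qed.

Lemma CF q : 0 < q -> forall n, C q SF n = R q n.+1.
Proof.
move=> q0; elim=> [|n IH]; first by rewrite C0 R1.
by rewrite CS /sc /= IH (proj1 (@closed q q0 n) q q0) [R q n.+2]R_rec Wn_recl.
Qed.

Lemma fcountR q n : 0 < q -> fcount q n = R q n.+1.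
Proof.
move=> q0; rewrite fcount_Wd -(@CF q q0 n) /C; apply: eq_count => w.
exact: (proj1 (@qdec_acc q q0 w)).
Qed.

Lemma R_key q m : R q m.+2 + Rn q m q = 2 * R q m.+1.
Proof.
rewrite [R q m.+2]R_rec Wn_recl [R q m.+1]R_rec Wn_recr. lia.
Qed.

Local Open Scope ring_scope.

Lemma sum_sel (a : nat -> int) n k :
  \sum_(i < n.+1) a i * ((n - i == k)%N)%:R = if (k <= n)%N then a (n - k)%N else 0.
Proof.
case: ifP => h.
  rewrite (bigD1 (Ordinal (leq_subr k n : (n - k < n.+1)%N))) //=.
  rewrite subKn // eqxx mulr1 big1 ?addr0 // => i hi.
  have -> : (n - i == k)%N = false; last by rewrite mulr0.
  apply/negbTE; apply: contra hi => /eqP e; apply/eqP/val_inj => /=.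
  have := ltn_ord i; lia.
rewrite big1 // => i _.
have -> : (n - i == k)%N = false; last by rewrite mulr0.
apply/negbTE/eqP => e; move: h; lia.
Qed.
Local Open Scope ring_scope.

Theorem corollary2 (q : nat) : (1 <= q)%N ->
  forall n : nat,
    \sum_(i < n.+1) (fcount q i)%:Z * (1 - 2%:R * 'X + 'X^(q + 2) : {poly int})`_(n - i)
    = (1 - 'X^(q + 1) : {poly int})`_n.
Proof.
move=> q0 n.
have cE k : (1 - 2%:R * 'X + 'X^(q + 2) : {poly int})`_k
   = ((k == 0)%N)%:R - ((k == 1)%N)%:R *+ 2 + ((k == q+2)%N)%:R.
  by rewrite coefD coefB coef1 mulr_natl coefMn coefX coefXn.
rewrite (eq_bigr (fun i : 'I_n.+1 => (fcount q i)%:Z * ((n - i == 0)%N)%:R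
   - ((fcount q i)%:Z * ((n - i == 1)%N)%:R) *+ 2 + (fcount q i)%:Z * ((n - i == q + 2)%N)%:R)); last first.
  by move=> i _; rewrite cE mulrDr mulrBr -[in RHS]mulrnAr.
rewrite big_split sumrB sumrMnl /= !(sum_sel (fun i => (fcount q i)%:Z)).
rewrite coefB coef1 coefXn !fcountR // subn0.
case: n => [|m].
  by rewrite addn2 addn1 /= mul0rn !subr0.
have K := R_key q m; rewrite /Rn in K.
rewrite /= subn1 /= mulr2n.
case: ltngtP => h.
- have hq : (q <= m)%N by lia.
  have e : ((m.+1 - (q + 2)).+1 = m - q)%N by lia.
  have e2 : (m.+1 == (q + 1)%N) = false by apply/negbTE; lia.
  rewrite hq in K; rewrite e e2.
  move/(congr1 Posz): K; rewrite PoszD PoszM /=. lia.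
- case: (ltngtP m q) => h2.
  + have hq : (q <= m)%N = false by lia.
    have e2 : (m.+1 == (q + 1)%N) = false by apply/negbTE; lia.
    rewrite hq in K; rewrite e2.
    move/(congr1 Posz): K; rewrite PoszD PoszM /=. lia.
  + lia.
  + subst m. rewrite leqnn subnn R0 in K. rewrite addn1 eqxx.
    move/(congr1 Posz): K; rewrite PoszD PoszM /=. lia.
- have hq : (q <= m)%N by lia.
  have e : ((m.+1 - (q + 2)).+1 = m - q)%N by lia.
  have e2 : (m.+1 == (q + 1)%N) = false by apply/negbTE; lia.
  rewrite hq in K; rewrite e e2.
  move/(congr1 Posz): K; rewrite PoszD PoszM /=. lia.
Qed.
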